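(* Let $S$ be a solid and let $x,y\in S$. Then $xy=e(xy)$ if and only if $x=e(x)$ or $y=e(y)$.
   Context: A solid is a set $S$ with two binary operations $+$ and $\cdot$ (written $xy$) and a binary relation $\le$ satisfying the following axioms (all variables range over $S$). (A1) $+$ is associative and commutative. (A2) For each $x$ there is $e$ with $x+e=x$ such that $e+f=e$ for every $f$ with $x+f=x$; this $e$ is unique and is denoted $e(x)$ (the magnitude of $x$). An element $x$ with $x=e(x)$ is called a magnitude. (A3) For each $x$ there is $s$ with $x+s=e(x)$ and $e(s)=e(x)$; it is unique and denoted $-x$; write $x-y$ for $x+(-y)$. (A4) $e(x+y)=e(x)$ or $e(x+y)=e(y)$. (M1) $\cdot$ is associative and commutative. (M2) For each $x\neq e(x)$ there is $u$ with $xu=x$ such that $uv=u$ for every $v$ with $xv=x$; it is unique and denoted $u(x)$. (M3) For each $x\ne e(x)$ there is $d$ with $xd=u(x)$ and $u(d)=u(x)$; it is unique and denoted $x^{-1}$; write $y/x$ for $yx^{-1}$. (M4) If $x\neq e(x)$ and $y\ne e(y)$ then $u(xy)=u(x)$ or $u(xy)=u(y)$. (O1) $\le$ is a total order (reflexive, antisymmetric, transitive, total); $x<y$ means $x\le y$ and $x\ne y$. (O2) $x\le y\Rightarrow x+z\le y+z$. (O3) $y+e(x)=e(x)\Rightarrow (y\le e(x)$ and $-y\le e(x))$. (O4) $(e(x)<x$ and $y\le z)\Rightarrow xy\le xz$. (O5) $e(y)\le y\le z\Rightarrow e(x)y\le e(x)z$. (AM1) For all $x,y$ there is $z$ with $e(x)y=e(z)$.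 (AM2) $e(xy)=e(x)y+e(y)x$. (AM3) If $x\ne e(x)$ then $e(u(x))=e(x)/x$. (AM4) (distributivity axiom) $xy+xz=x(y+z)+e(x)y+e(x)z$. (AM5) $-(xy)=(-x)y$. (E1) There is $m$ with $m+x=x$ for all $x$; it is unique, called zero and denoted $0$. (E2) There is $u$ with $ux=x$ for all $x$; it is unique, called one and denoted $1$. (E3) There is $M$ with $e(x)+M=M$ for all $x$. (E4) There is $x$ with $e(x)\ne 0$ and $e(x)\ne M$. (E5) For every $x$ there is $a$ with $x=a+e(x)$ and $e(a)=0$. (E6) If $x,y$ are magnitudes with $x<y$, there is $z$ with $z\ne e(z)$ and $x<z<y$. Further notation: $S^*=\{x\in S: x\ne e(x)\}$ (zeroless elements). $x$ is positive if $e(x)\le x$ and negative if $x<e(x)$; $|x|=x$ if $x$ is positive and $|x|=-x$ if $x$ is negative. $x$ is precise if $e(x)=0$. The relative uncertainty $R(x)$ is $e(u(x))$ if $x\ne e(x)$, and $M$ (from (E3)) if $x=e(x)$. *)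

(* Defs.v *)
(* The functions e, neg, u, inv are
   included as fields together with their defining (specification +
   uniqueness) axioms, exactly as (A2),(A3),(M2),(M3) stipulate. *)

Record Solid := {
  car :> Type;
  add : car -> car -> car;
  mul : car -> car -> car;
  le  : car -> car -> Prop;
  e   : car -> car;     (* magnitude, (A2) *)
  neg : car -> car;
  u   : car -> car;     (* u(x), (M2); meaningful for x <> e x *)
  inv : car -> car;     (* x^{-1}, (M3); meaningful for x <> e x *)
  Mbig : car;

  add_assoc : forall x y z, add x (add y z) = add (add x y) z;
  add_comm  : forall x y, add x y = add y x;
  e_spec1 : forall x, add x (e x) = x;
  e_spec2 : forall x f, add x f = x -> add (e x) f = e x;
  e_uniq  : forall x ee, add x ee = x -> (forall f, add x f = x -> add ee f = ee) -> ee = e x;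
  neg_spec1 : forall x, add x (neg x) = e x;
  neg_spec2 : forall x, e (neg x) = e x;
  neg_uniq  : forall x s, add x s = e x -> e s = e x -> s = neg x;
  e_add : forall x y, e (add x y) = e x \/ e (add x y) = e y;
  mul_assoc : forall x y z, mul x (mul y z) = mul (mul x y) z;
  mul_comm  : forall x y, mul x y = mul y x;
  u_spec1 : forall x, x <> e x -> mul x (u x) = x;
  u_spec2 : forall x v, x <> e x -> mul x v = x -> mul (u x) v = u x;
  u_uniq  : forall x w, x <> e x -> mul x w = x ->
              (forall v, mul x v = x -> mul w v = w) -> w = u x;
  inv_spec1 : forall x, x <> e x -> mul x (inv x) = u x;
  inv_spec2 : forall x, x <> e x -> u (inv x) = u x;
  inv_uniq  : forall x d, x <> e x -> mul x d = u x -> u d = u x -> d = inv x;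
  u_mul : forall x y, x <> e x -> y <> e y ->
            u (mul x y) = u x \/ u (mul x y) = u y;
  le_refl  : forall x, le x x;
  le_antisym : forall x y, le x y -> le y x -> x = y;
  le_trans : forall x y z, le x y -> le y z -> le x z;
  le_total : forall x y, le x y \/ le y x;
  le_add : forall x y z, le x y -> le (add x z) (add y z);
  O3 : forall x y, add y (e x) = e x -> le y (e x) /\ le (neg y) (e x);
  O4 : forall x y z, (le (e x) x /\ e x <> x) -> le y z -> le (mul x y) (mul x z);
  O5 : forall x y z, le (e y) y -> le y z -> le (mul (e x) y) (mul (e x) z);
  AM1 : forall x y, exists z, mul (e x) y = e z;
  AM2 : forall x y, e (mul x y) = add (mul (e x) y) (mul (e y) x);
  AM3 : forall x, x <> e x -> e (u x) = mul (e x) (inv x);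
  AM4 : forall x y z, add (mul x y) (mul x z)
          = add (add (mul x (add y z)) (mul (e x) y)) (mul (e x) z);
  AM5 : forall x y, neg (mul x y) = mul (neg x) y;
  E1 : exists m, forall x, add m x = x;
  E2 : exists one, forall x, mul one x = x;
  E3 : forall x, add (e x) Mbig = Mbig;
  (* (E4) -- 0 is the neutral element from (E1), M the element from (E3) *)
  E4 : forall m, (forall x, add m x = x) ->
         exists x, e x <> m /\ e x <> Mbig;
  E5 : forall x, exists a, x = add a (e x) /\
         (forall m, (forall y, add m y = y) -> e a = m);
  E6 : forall x y, x = e x -> y = e y -> (le x y /\ x <> y) ->
         exists z, z <> e z /\ (le x z /\ x <> z) /\ (le z y /\ z <> y)
}.

(* Main.v *)
Require Import Defs.

Lemma ee (S : Solid) (x : S) : e S (e S x) = e S x.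
Proof.
  symmetry. apply e_uniq.
  - apply e_spec2. apply e_spec1.
  - intros f H. exact H.
Qed.

Lemma mag_mul (S : Solid) (m a : S) : e S m = m -> e S (mul S m a) = mul S m a.
Proof.
  intros Hm. destruct (AM1 S m a) as [z Hz]. rewrite Hm in Hz.
  rewrite Hz. apply ee.
Qed.

Lemma mag_add (S : Solid) (m : S) : e S m = m -> add S m m = m.
Proof. intros Hm. pose proof (e_spec1 S m) as H. rewrite Hm in H. exact H. Qed.

Lemma neg_mag (S : Solid) (m : S) : e S m = m -> neg S m = m.
Proof. intros Hm. symmetry. apply neg_uniq. rewrite mag_add; auto. reflexivity. Qed.

Lemma negneg (S : Solid) (x : S) : neg S (neg S x) = x.
Proof.
  symmetry. apply neg_uniq.
  - rewrite add_comm, neg_spec1. symmetry. apply neg_spec2.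
  - symmetry. apply neg_spec2.
Qed.

Lemma u_zl (S : Solid) (x : S) : x <> e S x -> u S x <> e S (u S x).
Proof.
  intros Hx Hu. apply Hx.
  pose proof (u_spec1 S x Hx) as H.
  pose proof (mag_mul S (u S x) x (eq_sym Hu)) as H2.
  rewrite mul_comm, H in H2. symmetry; exact H2.
Qed.

Lemma u_idem (S : Solid) (x : S) : x <> e S x -> mul S (u S x) (u S x) = u S x.
Proof. intros Hx. apply u_spec2; auto. apply u_spec1; auto. Qed.

Lemma idem_ep (S : Solid) (p : S) : mul S p p = p -> mul S (e S p) p = e S p.
Proof.
  intros Hp. pose proof (AM2 S p p) as H. rewrite Hp in H.
  rewrite mag_add in H. symmetry; exact H.
  apply mag_mul. apply ee.
Qed.

Lemma pos_idem (S : Solid) (p : S) : mul S p p = p -> p <> e S p -> le S (e S p) p.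
Proof.
  intros Hp Hz. destruct (le_total S (e S p) p) as [H|H]; auto.
  pose proof (le_add S _ _ (neg S p) H) as H1.
  rewrite neg_spec1 in H1.
  assert (E: add S (e S p) (neg S p) = neg S p).
  { rewrite add_comm. rewrite <- (neg_spec2 S p). apply e_spec1. }
  rewrite E in H1.
  assert (Hn : e S (neg S p) <> neg S p).
  { intros C. rewrite neg_spec2 in C. apply Hz.
    rewrite <- (negneg S p). rewrite <- C. rewrite neg_mag by apply ee.
    symmetry. apply ee. }
  assert (H2 := O4 S (neg S p) (e S p) (neg S p)).
  rewrite neg_spec2 in H2. specialize (H2 (conj H1 (fun c => Hn ltac:(rewrite neg_spec2; exact c))) H1).
  rewrite <- AM5 in H2. rewrite mul_comm, idem_ep in H2 by exact Hp.
  rewrite <- AM5 in H2. rewrite mul_comm, <- AM5, Hp, negneg in H2.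
  rewrite neg_mag in H2 by apply ee. exact H2.
Qed.

Lemma zero_le_mag (S : Solid) (z m : S) : (forall x, add S z x = x) -> le S z (e S m).
Proof. intros Hz. apply (O3 S m z). apply Hz. Qed.

Lemma keyL (S : Solid) (p r : S) : le S (e S p) p -> le S p (neg S r) -> le S r (e S r).
Proof.
  intros Hp H. destruct (E1 S) as [z Hz].
  pose proof (le_add S _ _ r H) as H1. rewrite (add_comm S (neg S r) r), neg_spec1 in H1.
  pose proof (le_add S _ _ r Hp) as H2.
  pose proof (le_add S _ _ r (zero_le_mag S z p Hz)) as H3. rewrite Hz in H3.
  eapply le_trans; [exact H3|]. eapply le_trans; [exact H2|]. exact H1.
Qed.

Lemma coreC (S : Solid) (p q : S) : mul S p p = p -> mul S q q = q ->
  p <> e S p -> q <> e S q -> le S p q -> e S (mul S p q) = mul S p q -> False.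
Proof.
  intros Pp Pq Zp Zq Hpq HM.
  assert (Ep := pos_idem S p Pp Zp). assert (Eq := pos_idem S q Pq Zq).
  assert (O4p : forall y z, le S y z -> le S (mul S p y) (mul S p z)).
  { intros y z; apply O4; split; auto. }
  assert (O4q : forall y z, le S y z -> le S (mul S q y) (mul S q z)).
  { intros y z; apply O4; split; auto. }
  assert (H1 : le S p (mul S p q)) by (pose proof (O4p _ _ Hpq) as T; rewrite Pp in T; exact T).
  destruct (le_total S (neg S q) (neg S p)) as [H|H].
  - apply O4p in H. rewrite (mul_comm S p (neg S q)), <- AM5, mul_comm, neg_mag in H by exact HM.
    rewrite (mul_comm S p (neg S p)), <- AM5, Pp in H.
    apply Zp. apply le_antisym; auto. apply (keyL S p p); auto. eapply le_trans; eauto.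
  - apply O4q in H. rewrite (mul_comm S q (neg S p)), <- AM5, neg_mag in H by exact HM.
    rewrite (mul_comm S q (neg S q)), <- AM5, Pq in H.
    apply Zq. apply le_antisym; auto. apply (keyL S p q); auto. eapply le_trans; eauto.
Qed.

From Stdlib Require Import Classical.

Theorem mainTheorem12 (S : Solid) (x y : S) :
  mul S x y = e S (mul S x y) <-> (x = e S x \/ y = e S y).
Proof.
  split.
  - intros H.
    destruct (classic (x = e S x)) as [Hx|Hx]; [left; exact Hx|].
    destruct (classic (y = e S y)) as [Hy|Hy]; [right; exact Hy|].
    exfalso.
    assert (Eq : mul S (u S x) (u S y) = mul S (mul S x y) (mul S (inv S x) (inv S y))).
    { rewrite <- (inv_spec1 S x Hx), <- (inv_spec1 S y Hy).
      rewrite !mul_assoc. f_equal.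
      rewrite <- !mul_assoc. f_equal. apply mul_comm. }
    assert (HM : e S (mul S (u S x) (u S y)) = mul S (u S x) (u S y)).
    { rewrite Eq. apply mag_mul. symmetry; exact H. }
    pose proof (u_idem S x Hx). pose proof (u_idem S y Hy).
    pose proof (u_zl S x Hx). pose proof (u_zl S y Hy).
    destruct (le_total S (u S x) (u S y)) as [L|L].
    + exact (coreC S (u S x) (u S y) H0 H1 H2 H3 L HM).
    + rewrite mul_comm in HM. exact (coreC S (u S y) (u S x) H1 H0 H3 H2 L HM).
  - intros [H|H].
    + symmetry. apply mag_mul. symmetry; exact H.
    + rewrite mul_comm. symmetry. apply mag_mul. symmetry; exact H.
Qed.
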